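(* Let $L$ be a finite geometric lattice, fix a total order on its set of atoms $A(L)$, and let $\lambda$ be the minimum labeling: for a cover $x\lessdot y$, $\lambda(x\lessdot y)$ is the smallest atom $a$ (in the fixed order) with $x\vee a=y$. Then $\lambda$ is an EW-labeling of $L$.
   Context: An E-labeling is a map $\lambda$ from the cover relations of $L$ to a poset $\Lambda$ (here the totally ordered set $A(L)$). Words of labels of saturated chains are read bottom to top; a chain is increasing if its word is strictly increasing and ascent-free if no two consecutive labels $a,b$ satisfy $a<b$. An ER-labeling is an E-labeling such that every closed interval has exactly one increasing maximal chain. Rank two switching property: for every saturated chain $\hat0=x_0\lessdot\cdots\lessdot x_k$ and every $i$ with $\lambda(x_{i-1}\lessdot x_i)<\lambda(x_i\lessdot x_{i+1})$ there is a unique $x_i'$ with $x_{i-1}\lessdot x_i'\lessdot x_{i+1}$, $\lambda(x_{i-1}\lessdot x_i')=\lambda(x_i\lessdot x_{i+1})$ and $\lambda(x_i'\lessdot x_{i+1})=\lambda(x_{i-1}\lessdot x_i)$. An EW-labeling is an ER-labeling with the rank two switching property such that in each interval distinct maximal chains have distinct words of labels. *)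

(* Defs.v *)
From mathcomp Require Import all_boot all_order.
Set Implicit Arguments. Unset Strict Implicit. Unset Printing Implicit Defensive.
Import Order.TTheory.
Local Open Scope order_scope.

Section GeomLattice.
Variables (disp : Order.disp_t) (L : finTBLatticeType disp).

Definition cover (x y : L) : bool := (x < y) && [forall z : L, ~~ ((x < z) && (z < y))].

Definition atom (a : L) : bool := cover \bot a.

Definition atomistic : Prop := forall x : L, x = \join_(a : L | atom a && (a <= x)) a.

Definition semimodular : Prop :=
  forall x y : L, cover (x `&` y) x -> cover y (x `|` y).

Definition geometric : Prop := atomistic /\ semimodular.

(* A total order on the atoms is given by an injective ranking ord on atoms:
   a precedes b iff ord a < ord b.  Labels are atoms; label order via ord. *)
Variable ord : L -> nat.
Variable lam : L -> L -> L.   (* lam x y = label of the cover x <. y *)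

Definition min_labeling : Prop :=
  forall x y : L, cover x y ->
    [/\ atom (lam x y), x `|` lam x y = y &
        forall a : L, atom a -> x `|` a = y -> (ord (lam x y) <= ord a)%N].

(* saturated chain x = x_0 <. x_1 <. ... <. x_k = last x s, coded by s *)
Definition sat_chain (x : L) (s : seq L) (y : L) : bool :=
  path cover x s && (last x s == y).

Definition word (x : L) (s : seq L) : seq L := pairmap lam x s.

Definition lab_lt (a b : L) : bool := (ord a < ord b)%N.

Definition increasing (w : seq L) : bool := sorted lab_lt w.

Definition ER_labeling : Prop :=
  forall x y : L, x <= y ->
    exists s, (sat_chain x s y && increasing (word x s)) /\
      forall t, sat_chain x t y && increasing (word x t) -> t = s.

Definition rank_two_switching : Prop :=
  forall (s : seq L) (i : nat), path cover \bot s -> (0 < i)%N -> (i < size s)%N ->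
    let c := \bot :: s in
    let xm := nth \bot c i.-1 in
    let xi := nth \bot c i in
    let xp := nth \bot c i.+1 in
    lab_lt (lam xm xi) (lam xi xp) ->
    exists x', [/\ cover xm x', cover x' xp, lam xm x' = lam xi xp
                 & lam x' xp = lam xm xi] /\
      forall z, [/\ cover xm z, cover z xp, lam xm z = lam xi xp
                 & lam z xp = lam xm xi] -> z = x'.

Definition distinct_words : Prop :=
  forall (x y : L) (s t : seq L), sat_chain x s y -> sat_chain x t y ->
    word x s = word x t -> s = t.

Definition EW_labeling : Prop :=
  [/\ ER_labeling, rank_two_switching & distinct_words].

End GeomLattice.

(* Main.v *)
Require Import Defs.
From mathcomp Require Import all_boot all_order.
Set Implicit Arguments. Unset Strict Implicit. Unset Printing Implicit Defensive.
Import Order.TTheory.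
Local Open Scope order_scope.
Set Warnings "-notation-overridden".
Local Notation cover := Defs.cover.

Lemma cover_lt disp (L : finTBLatticeType disp) (x y : L) : cover x y -> x < y.
Proof. by case/andP. Qed.

Lemma cover_eq disp (L : finTBLatticeType disp) (x y z : L) :
  cover x y -> x < z -> z <= y -> z = y.
Proof.
case/andP=> _ /forallP /(_ z); rewrite negb_and => /orP[/negP//|/negP H] xz.
by rewrite le_eqVlt => /orP[/eqP//|/H].
Qed.

Lemma join_notle disp (L : finTBLatticeType disp) (x y a : L) :
  cover x y -> x `|` a = y -> ~~ (a <= x).
Proof.
move=> /cover_lt xy E; apply/negP => ax.
move: xy; rewrite -E; rewrite leEjoin joinC in ax; by rewrite (eqP ax) ltxx.
Qed.

Lemma atom_cover disp (L : finTBLatticeType disp) (a x : L) :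
  semimodular L -> atom a -> ~~ (a <= x) -> cover x (x `|` a).
Proof.
move=> sm at_a nax; rewrite joinC; apply: sm.
have -> : a `&` x = \bot.
  case: (eqVneq (a `&` x) \bot) => // ne.
  have h : \bot < a `&` x by rewrite lt_neqAle eq_sym ne le0x.
  have := cover_eq at_a h (leIl a x) => E.
  by move: nax; rewrite -E leIr.
exact: at_a.
Qed.

Lemma exists_atom disp (L : finTBLatticeType disp) (x y : L) :
  atomistic L -> x < y -> exists a, [/\ atom a, a <= y & ~~ (a <= x)].
Proof.
move=> am xy.
case: (boolP [exists a, [&& atom a, a <= y & ~~ (a <= x)]]).
  by case/existsP=> a /and3P[]; exists a.
rewrite negb_exists => /forallP H.
have : y <= x.
  rewrite (am y); apply/joinsP => a /andP[ata ay].
  by have := H a; rewrite ata ay /= negbK.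
by move=> yx; move: (lt_le_trans xy yx); rewrite ltxx.
Qed.


Lemma r2_core disp (L : finTBLatticeType disp) (ord : L -> nat) (lam : L -> L -> L)
  (xm xi xp : L) :
  semimodular L -> {in [pred a | atom a] &, injective ord} ->
  min_labeling ord lam ->
  cover xm xi -> cover xi xp -> lab_lt ord (lam xm xi) (lam xi xp) ->
    exists x', [/\ cover xm x', cover x' xp, lam xm x' = lam xi xp
                 & lam x' xp = lam xm xi] /\
      forall z, [/\ cover xm z, cover z xp, lam xm z = lam xi xp
                 & lam z xp = lam xm xi] -> z = x'.
Proof.
move=> sm inj ml c1 c2 lt.
case: (ml _ _ c1) => ata ja mina. case: (ml _ _ c2) => atb jb minb.
move: ata ja mina lt atb jb minb.
set a := lam xm xi; set b := lam xi xp => ata ja mina lt atb jb minb.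
have nbxi : ~~ (b <= xi) := join_notle c2 jb.
have mxi : xm <= xi := ltW (cover_lt c1).
have ixp : xi <= xp := ltW (cover_lt c2).
have nbxm : ~~ (b <= xm) by apply: contra nbxi => h; exact: le_trans h mxi.
have naxm := join_notle c1 ja.
pose x' := xm `|` b.
have c3 : cover xm x' := atom_cover sm atb nbxm.
have bxp : b <= xp by rewrite -jb leUr.
have axi : a <= xi by rewrite -ja leUr.
have axp : a <= xp := le_trans axi ixp.
have x'xp : x' <= xp by rewrite leUx (le_trans mxi ixp) bxp.
have nax' : ~~ (a <= x').
  apply/negP => ax'.
  have xix' : xi <= x' by rewrite -ja leUx leUl ax'.
  have e := cover_eq c3 (cover_lt c1) xix'.
  by move: nbxi; rewrite e leUr.
have j4 : x' `|` a = xp by rewrite /x' joinAC ja jb.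
have c4 : cover x' xp by rewrite -j4; exact: atom_cover sm ata nax'.
have l3 : lam xm x' = b.
  case: (ml _ _ c3) => atc jc minc.
  apply: inj; rewrite ?inE //; apply/eqP; rewrite eqn_leq minc //=.
  apply: minb => //.
  have ncxi : ~~ (lam xm x' <= xi).
    apply/negP => cxi.
    have x'xi : x' <= xi by rewrite -jc leUx mxi cxi.
    have e := cover_eq c1 (cover_lt c3) x'xi.
    by move: nbxi; rewrite -e /x' leUr.
  apply: (cover_eq c2 (cover_lt (atom_cover sm atc ncxi))).
  rewrite leUx ixp /=; apply: le_trans x'xp; by rewrite -[X in _ <= X]jc leUr.
have l4 : lam x' xp = a.
  case: (ml _ _ c4) => atc jc minc.
  apply: inj; rewrite ?inE //; apply/eqP; rewrite eqn_leq minc //=.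
  rewrite leqNgt; apply/negP => ltca.
  have ncx' := join_notle c4 jc.
  have ncxm : ~~ (lam x' xp <= xm).
    by apply: contra ncx' => h; apply: le_trans h _; exact: leUl.
  case: (boolP (lam x' xp <= xi)) => cxi.
    have yxi : xm `|` lam x' xp <= xi by rewrite leUx mxi cxi.
    have e := cover_eq c1 (cover_lt (atom_cover sm atc ncxm)) yxi.
    by have := mina _ atc e; rewrite leqNgt ltca.
  have cxp : lam x' xp <= xp by rewrite -[X in _ <= X]jc leUr.
  have xcxp : xi `|` lam x' xp <= xp by rewrite leUx ixp cxp.
  have e := cover_eq c2 (cover_lt (atom_cover sm atc cxi)) xcxp.
  have := minb _ atc e; move: lt; rewrite /lab_lt => lt' h.
  have := leq_ltn_trans h (ltn_trans ltca lt'); by rewrite ltnn.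
exists x'; split; first by split.
move=> z [cz1 cz2 lz _]. case: (ml _ _ cz1) => _ jz _. by rewrite -jz lz.
Qed.


Lemma r2_main disp (L : finTBLatticeType disp) (ord : L -> nat) (lam : L -> L -> L) :
  semimodular L -> {in [pred a | atom a] &, injective ord} ->
  min_labeling ord lam -> rank_two_switching ord lam.
Proof.
move=> sm inj ml s [|j] ps // _ jsz /=.
have c1 := (pathP \bot ps) j (ltnW jsz).
have c2 := (pathP \bot ps) j.+1 jsz.
exact: r2_core sm inj ml c1 c2.
Qed.

Lemma dw_main disp (L : finTBLatticeType disp) (ord : L -> nat) (lam : L -> L -> L) :
  min_labeling ord lam -> distinct_words lam.
Proof.
move=> ml x y s; elim: s x => [|s1 s IH] x [|t1 t] //=.
rewrite /sat_chain /word /= => /andP[/andP[c1 p1] l1] /andP[/andP[c2 p2] l2] [e w].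
have E : s1 = t1.
  case: (ml _ _ c1) => _ j1 _; case: (ml _ _ c2) => _ j2 _.
  by rewrite -j1 -j2 e.
subst t1; congr (_ :: _); apply: (IH s1) => //; rewrite /sat_chain ?p1 ?p2 //.
Qed.

Lemma path_le disp (L : finTBLatticeType disp) (x : L) t :
  path (@Defs.cover disp L) x t -> x <= last x t.
Proof.
elim: t x => [|y t IH] x //= /andP[c p].
exact: le_trans (ltW (cover_lt c)) (IH _ p).
Qed.

Lemma first_min disp (L : finTBLatticeType disp) (ord : L -> nat) (lam : L -> L -> L) :
  semimodular L -> min_labeling ord lam ->
  forall t x, path (@Defs.cover disp L) x t -> sorted (lab_lt ord) (word lam x t) -> t != [::] ->
  forall c, atom c -> c <= last x t -> ~~ (c <= x) -> ord (lam x (head x t)) <= ord c.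
Proof.
move=> sm ml; elim=> [|x1 t IH] x //= /andP[c1 p] srt _ c atc cl ncx.
case: (ml _ _ c1) => _ _ mn.
case: (boolP (c <= x1)) => cx1.
  apply: mn => //.
  have h : x `|` c <= x1 by rewrite leUx (ltW (cover_lt c1)) cx1.
  exact: cover_eq c1 (cover_lt (atom_cover sm atc ncx)) h.
case: t IH p srt cl => [|x2 t] IH p srt cl; first by rewrite cl in cx1.
move: srt; rewrite /word /= => /andP[lt12 srt].
have := IH x1 p srt isT c atc cl cx1 => /= h.
exact: leq_trans (ltnW lt12) h.
Qed.

Lemma er_uniq disp (L : finTBLatticeType disp) (ord : L -> nat) (lam : L -> L -> L) :
  semimodular L -> {in [pred a | atom a] &, injective ord} ->
  min_labeling ord lam -> forall y t s x,
  sat_chain x t y && increasing ord (word lam x t) ->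
  sat_chain x s y && increasing ord (word lam x s) -> t = s.
Proof.
move=> sm inj ml y; elim=> [|t1 t IH] [|s1 s] x //=;
  rewrite /sat_chain /increasing /=.
- move=> /andP[/eqP xy _] /andP[/andP[p l] _].
  move: p => /andP[c p]; have := path_le p; rewrite (eqP l) -xy => h.
  have := lt_le_trans (cover_lt c) h; by rewrite ltxx.
- move=> /andP[/andP[p l] _] /andP[/eqP xy _].
  move: p => /andP[c p]; have := path_le p; rewrite (eqP l) -xy => h.
  have := lt_le_trans (cover_lt c) h; by rewrite ltxx.
move=> /andP[/andP[pt lt] it] /andP[/andP[ps ls] is_].
have pt' := pt; have ps' := ps.
move: pt ps => /andP[ct pt] /andP[cs ps].
case: (ml _ _ ct) => ata ja _; case: (ml _ _ cs) => atb jb _.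
have ay : lam x t1 <= y.
  rewrite -(eqP lt); apply: le_trans _ (path_le pt); by rewrite -[X in _ <= X]ja leUr.
have bY : lam x s1 <= y.
  rewrite -(eqP ls); apply: le_trans _ (path_le ps); by rewrite -[X in _ <= X]jb leUr.
have bl : lam x s1 <= last t1 t by rewrite (eqP lt).
have al : lam x t1 <= last s1 s by rewrite (eqP ls).
have h1 := @first_min _ L ord lam sm ml (t1 :: t) x pt' it isT _ atb bl (join_notle cs jb).
have h2 := @first_min _ L ord lam sm ml (s1 :: s) x ps' is_ isT _ ata al (join_notle ct ja).
have e : lam x t1 = lam x s1 by apply: inj; rewrite ?inE //; apply/eqP; rewrite eqn_leq; apply/andP; split; [exact: h1 | exact: h2].
have E : t1 = s1 by rewrite -ja -jb e.
subst s1; congr (_ :: _); apply: (IH _ t1).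
  by rewrite /sat_chain pt lt /=; exact: path_sorted it.
by rewrite /sat_chain ps ls /=; exact: path_sorted is_.
Qed.

Lemma er_exists disp (L : finTBLatticeType disp) (ord : L -> nat) (lam : L -> L -> L) :
  atomistic L -> semimodular L -> {in [pred a | atom a] &, injective ord} ->
  min_labeling ord lam -> forall n (x y : L), leq #|[pred z | x <= z]| n -> x <= y ->
  exists s, sat_chain x s y && increasing ord (word lam x s).
Proof.
move=> am sm inj ml; elim=> [|n IH] x y.
  by rewrite leqn0 => /eqP/card0_eq/(_ x); rewrite inE lexx.
move=> cn; rewrite le_eqVlt => /orP[/eqP <-|xy].
  by exists [::]; rewrite /sat_chain /= eqxx.
have [a0 [ata0 a0y na0x]] := exists_atom am xy.
pose P := fun a => [&& atom a, a <= y & ~~ (a <= x)].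
have Pa0 : P a0 by rewrite /P ata0 a0y.
case: (@fintype.arg_minnP L a0 P ord Pa0) => a /and3P[ata ay nax] amin.
pose x1 := x `|` a.
have c1 : cover x x1 := atom_cover sm ata nax.
have x1y : x1 <= y by rewrite leUx (ltW xy) ay.
have cn1 : leq #|[pred z | x1 <= z]| n.
  rewrite -ltnS; apply: leq_trans cn; apply: proper_card; apply/properP; split.
    by apply/subsetP => z; rewrite !inE => h; apply: le_trans h; exact: leUl.
  exists x; rewrite !inE ?lexx //.
  by apply/negP => h; have := lt_le_trans (cover_lt c1) h; rewrite ltxx.
have [s' /andP[/andP[p' l'] i']] := IH x1 y cn1 x1y.
exists (x1 :: s'); rewrite /sat_chain /increasing /= c1 p' l' /=.
have la : lam x x1 = a.
  case: (ml _ _ c1) => atl jl mnl.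
  apply: inj; rewrite ?inE //; apply/eqP; rewrite eqn_leq mnl //=.
  apply: amin; rewrite /P atl /= (join_notle c1 jl) andbT.
  apply: le_trans _ x1y; by rewrite -[X in _ <= X]jl leUr.
rewrite la.
case: s' p' l' i' => [|x2 s''] p' l' i' //=.
move: i'; rewrite /increasing /word /= => i'; rewrite i' andbT.
move: p' => /= /andP[c2 p''].
case: (ml _ _ c2) => atb jb _.
have nbx1 := join_notle c2 jb.
have bx2 : lam x1 x2 <= x2 by rewrite -[X in _ <= X]jb leUr.
have by' : lam x1 x2 <= y by apply: le_trans bx2 _; rewrite -(eqP l'); exact: path_le.
have nbx : ~~ (lam x1 x2 <= x).
  by apply: contra nbx1 => h; apply: le_trans h _; exact: leUl.
have Pb : P (lam x1 x2) by rewrite /P atb by' nbx.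
have h := amin (lam x1 x2) Pb.
rewrite /lab_lt ltn_neqAle h andbT; apply/negP => /eqP e.
have e' : a = lam x1 x2 by apply: inj; rewrite ?inE.
by move: nbx1; rewrite -e' /x1 leUr.
Qed.

Theorem proposition5p3 (disp : Order.disp_t) (L : finTBLatticeType disp)
  (ord : L -> nat) (lam : L -> L -> L) :
  geometric L ->
  {in [pred a | atom a] &, injective ord} ->
  min_labeling ord lam ->
  EW_labeling ord lam.
Proof.
move=> [am sm] inj ml; split.
- move=> x y xy.
  have [s hs] := er_exists am sm inj ml (leqnn _) xy.
  exists s; split => // t ht; exact: (er_uniq sm inj ml ht hs).
- exact: r2_main sm inj ml.
- exact: dw_main ml.
Qed.
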